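(* Let $c\in\mathbb{R}\setminus\{0\}$. The group of direct isometries of the hyperboloid $(H,\mathrm{g}_c)$ satisfies $$\mathrm{Isom}_+(H,\mathrm{g}_c)=\ker(S_c)\cong\mathrm{PSL}(2,\mathbb{R}),$$ where $\mathrm{Isom}_+(H,\mathrm{g}_c)=\{\varphi\in\mathrm{Diff}_+(\mathbb{T}):(\varphi\times\varphi)^*\mathrm{g}_c=\mathrm{g}_c\}$ and $\ker(S_c)=\{\varphi\in\mathrm{Diff}_+(\mathbb{T}):S_c(\varphi)=0\}$.
   Context: $\mathbb{T}=\mathbb{R}/2\pi\mathbb{Z}$, $H=\mathbb{T}\times\mathbb{T}-\Delta$ with $\Delta$ the diagonal, $\mathrm{g}_c=\dfrac{4c\,d\theta_1d\theta_2}{|e^{i\theta_1}-e^{i\theta_2}|^2}$. $\mathrm{Diff}_+(\mathbb{T})$ acts on $H$ by $\varphi\mapsto\varphi\times\varphi$ (the orientation-preserving conformal diffeomorphisms). $S_c(\varphi)=\tfrac32\big((\varphi\times\varphi)^*\mathrm{g}_c-\mathrm{g}_c\big)|_\Delta$, where the tensor extends smoothly across $\Delta$ and $|_\Delta$ is pullback by $\theta\mapsto(\theta,\theta)$; equivalently $S_c(\varphi)=c\big(S(\varphi)+\tfrac12(\varphi'^2-1)d\theta^2\big)$ with $S(\varphi)=\big(\varphi'''/\varphi'-\tfrac32(\varphi''/\varphi')^2\big)d\theta^2$ computed on a lift of $\varphi$ to $\mathbb{R}$. *)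

(* Defs.v *)
From Stdlib Require Import Reals Lra.
From Coquelicot Require Import Coquelicot.
Open Scope R_scope.

Definition smooth (f : R -> R) : Prop :=
  forall (n : nat) (x : R), ex_derive (Derive_n f n) x.

(* A lift to R of an element of Diff_+(T), T = R/2piZ:
   smooth, commutes with the deck translation x |-> x + 2pi (degree 1),
   with everywhere positive derivative (orientation preserving diffeo). *)
Definition is_lift (f : R -> R) : Prop :=
  smooth f /\
  (forall x, f (x + 2 * PI) = f x + 2 * PI) /\
  (forall x, 0 < Derive f x).

(* Two lifts represent the same element of Diff_+(T). *)
Definition same_diffeo (f g : R -> R) : Prop :=
  exists k : Z, forall x, g x = f x + 2 * PI * IZR k.

(* |e^{ia} - e^{ib}|^2 *)
Definition chord2 (a b : R) : R :=
  (cos a - cos b) ^ 2 + (sin a - sin b) ^ 2.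

(* (t1,t2) represents a point of H = T x T - Diagonal *)
Definition offdiag (t1 t2 : R) : Prop :=
  forall k : Z, t1 - t2 <> 2 * PI * IZR k.

(* coefficient of g_c = 4c dθ1 dθ2 / |e^{iθ1}-e^{iθ2}|^2 *)
Definition gc (c t1 t2 : R) : R := 4 * c / chord2 t1 t2.

(* (phi x phi)^* g_c = g_c on H *)
Definition is_isom (c : R) (f : R -> R) : Prop :=
  forall t1 t2, offdiag t1 t2 ->
    gc c (f t1) (f t2) * Derive f t1 * Derive f t2 = gc c t1 t2.

(* coefficient of d theta^2 in S_c(phi) = c (S(phi) + 1/2 (phi'^2 - 1)) d theta^2 *)
Definition Sc (c : R) (f : R -> R) (x : R) : R :=
  c * (Derive_n f 3 x / Derive f x
       - 3 / 2 * (Derive_n f 2 x / Derive f x) ^ 2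
       + 1 / 2 * (Derive f x ^ 2 - 1)).

Definition in_ker_Sc (c : R) (f : R -> R) : Prop :=
  forall x, Sc c f x = 0.

Record mat2 := Mat2 { m11 : R; m12 : R; m21 : R; m22 : R }.

Definition mdet (A : mat2) : R := m11 A * m22 A - m12 A * m21 A.

Definition mmul (A B : mat2) : mat2 :=
  Mat2 (m11 A * m11 B + m12 A * m21 B) (m11 A * m12 B + m12 A * m22 B)
       (m21 A * m11 B + m22 A * m21 B) (m21 A * m12 B + m22 A * m22 B).

Definition mI : mat2 := Mat2 1 0 0 1.
Definition mnegI : mat2 := Mat2 (-1) 0 0 (-1).

(* Main.v *)
Require Import Defs.
From Stdlib Require Import Reals Lra Lia FunctionalExtensionality.
From Coquelicot Require Import Coquelicot.
Open Scope R_scope.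


Lemma sq_pos_of_ne (x : R) : x <> 0 -> 0 < x ^ 2.
Proof. intros H. apply pow2_gt_0; auto. Qed.

Lemma chord2_eq (a b : R) : chord2 a b = 4 * sin ((a - b) / 2) ^ 2.
Proof.
  unfold chord2.
  assert (E : a - b = 2 * ((a - b) / 2)) by field.
  assert (Hc : cos (a - b) = 1 - 2 * sin ((a - b) / 2) ^ 2).
  { rewrite E at 1. rewrite cos_2a_sin. ring. }
  rewrite cos_minus in Hc.
  assert (H1 := sin2_cos2 a). assert (H2 := sin2_cos2 b).
  unfold Rsqr in *. nra.
Qed.

Lemma const_on_interval (g : R -> R) (a b : R) :
  (forall x, a < x < b -> is_derive g x 0) ->
  forall x y, a < x < b -> a < y < b -> g x = g y.
Proof.
  intros Hd.
  assert (K : forall x y, a < x < b -> a < y < b -> x < y -> g x = g y).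
  { intros x y Hx Hy Hxy.
    destruct (MVT_cor2 g (fun _ => 0) x y Hxy) as [z [Hz _]].
    - intros z Hz. apply is_derive_Reals. apply Hd. lra.
    - lra. }
  intros x y Hx Hy. destruct (Rtotal_order x y) as [H|[H|H]].
  - apply K; auto.
  - subst; auto.
  - symmetry; apply K; auto.
Qed.

Lemma const_all (g : R -> R) :
  (forall x, is_derive g x 0) -> forall x y, g x = g y.
Proof.
  intros Hd x y.
  apply (const_on_interval g (Rmin x y - 1) (Rmax x y + 1)).
  - intros; apply Hd.
  - split; [apply Rlt_le_trans with (Rmin x y); [lra| apply Rmin_l] |
            apply Rle_lt_trans with (Rmax x y); [apply Rmax_l | lra]].
  - split; [apply Rlt_le_trans with (Rmin x y); [lra| apply Rmin_r] |
            apply Rle_lt_trans with (Rmax x y); [apply Rmax_r | lra]].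
Qed.

Lemma strict_incr (g dg : R -> R) :
  (forall x, is_derive g x (dg x)) -> (forall x, 0 < dg x) ->
  forall x y, x < y -> g x < g y.
Proof.
  intros Hd Hp x y Hxy.
  destruct (MVT_cor2 g dg x y Hxy) as [z [Hz _]].
  - intros z _. apply is_derive_Reals. apply Hd.
  - assert (0 < dg z * (y - x)) by (apply Rmult_lt_0_compat; [apply Hp | lra]). lra.
Qed.

Lemma derive_unique_loc (g1 g2 : R -> R) (x l1 l2 : R) :
  locally x (fun t => g1 t = g2 t) ->
  is_derive g1 x l1 -> is_derive g2 x l2 -> l1 = l2.
Proof.
  intros Hl H1 H2.
  apply (is_derive_ext_loc _ _ _ _ Hl) in H1.
  apply is_derive_unique in H1. apply is_derive_unique in H2. congruence.
Qed.

Lemma locally_interval (x a b : R) (P : R -> Prop) :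
  a < x < b -> (forall y, a < y < b -> P y) -> locally x P.
Proof.
  intros Hx HP.
  assert (He : 0 < Rmin (x - a) (b - x)) by (apply Rmin_pos; lra).
  exists (mkposreal _ He). intros y Hy. apply HP.
  unfold ball in Hy; simpl in Hy; unfold AbsRing_ball, abs, minus, plus, opp in Hy; simpl in Hy.
  assert (H1 := Rmin_l (x - a) (b - x)). assert (H2 := Rmin_r (x - a) (b - x)).
  apply Rabs_def2 in Hy. lra.
Qed.

Lemma lift_ex_derive_n (f : R -> R) (n : nat) (x : R) :
  is_lift f -> is_derive (Derive_n f n) x (Derive_n f (S n) x).
Proof. intros [Hs _]. simpl. apply Derive_correct. apply Hs. Qed.

Lemma lift_d0 (f : R -> R) x : is_lift f -> is_derive f x (Derive f x).
Proof. intros H. apply (lift_ex_derive_n f 0 x H). Qed.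

Lemma lift_d1 (f : R -> R) x : is_lift f -> is_derive (Derive f) x (Derive_n f 2 x).
Proof. intros H. apply (lift_ex_derive_n f 1 x H). Qed.

Lemma lift_d2 (f : R -> R) x : is_lift f -> is_derive (Derive_n f 2) x (Derive_n f 3 x).
Proof. intros H. apply (lift_ex_derive_n f 2 x H). Qed.

Lemma lift_incr (f : R -> R) : is_lift f -> forall x y, x < y -> f x < f y.
Proof.
  intros H. apply (strict_incr f (Derive f)).
  - intros; apply lift_d0; auto.
  - apply H.
Qed.

Lemma lift_cont (f : R -> R) x : is_lift f -> continuous f x.
Proof. intros H. apply (ex_derive_continuous (V := R_NormedModule) f x). eexists. apply lift_d0; auto. Qed.


Lemma inv_sin2 y : sin y <> 0 -> / sin y ^ 2 = 1 + (cos y / sin y) ^ 2.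
Proof. intros H. assert (E := sin2_cos2 y). unfold Rsqr in E. field_simplify; auto.
  rewrite <- E. field. auto. Qed.

Lemma iso_identity (c : R) (f : R -> R) (t b : R) :
  c <> 0 -> is_lift f -> is_isom c f -> b < t < b + 2 * PI ->
  0 < f t - f b < 2 * PI /\
  Derive f t * Derive f b * sin ((t - b) / 2) ^ 2 = sin ((f t - f b) / 2) ^ 2.
Proof.
  intros hc hf hi Ht.
  assert (Hp := PI_RGT_0).
  assert (Hfi : f b < f t /\ f t < f b + 2 * PI).
  { split. apply lift_incr; auto; lra.
    rewrite <- (proj1 (proj2 hf)). apply lift_incr; auto. lra. }
  split; [lra|].
  assert (Hoff : offdiag t b).
  { intros k Hk.
    assert (H1 : 0 < IZR k) by (apply Rmult_lt_reg_l with (2 * PI); lra).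
    assert (H2 : IZR k < 1) by (apply Rmult_lt_reg_l with (2 * PI); lra).
    apply lt_IZR in H1. apply lt_IZR in H2. lia. }
  assert (HsX : 0 < sin ((t - b) / 2)) by (apply sin_gt_0; lra).
  assert (HsY : 0 < sin ((f t - f b) / 2)) by (apply sin_gt_0; lra).
  specialize (hi t b Hoff). unfold gc in hi. rewrite !chord2_eq in hi.
  set (A := sin ((f t - f b) / 2) ^ 2) in *.
  set (B := sin ((t - b) / 2) ^ 2) in *.
  assert (HA : 0 < A) by (unfold A; nra).
  assert (HB : 0 < B) by (unfold B; nra).
  replace (Derive f t * Derive f b * B) with
    ((4 * c / (4 * A) * Derive f t * Derive f b) * (A * B / c)) by (field; lra).
  rewrite hi. field. lra.
Qed.

Definition Phi (f : R -> R) (b t : R) : R :=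
  cos ((f t - f b) / 2) / sin ((f t - f b) / 2)
  - (cos ((t - b) / 2) / sin ((t - b) / 2)) / Derive f b.

Lemma Phi_dt (c : R) (f : R -> R) (b t : R) :
  c <> 0 -> is_lift f -> is_isom c f -> b < t < b + 2 * PI ->
  is_derive (Phi f b) t 0.
Proof.
  intros hc hf hi Ht.
  assert (Hp := PI_RGT_0).
  destruct (iso_identity c f t b hc hf hi Ht) as [Hr Hid].
  assert (HsX : 0 < sin ((t - b) / 2)) by (apply sin_gt_0; lra).
  assert (HsY : 0 < sin ((f t - f b) / 2)) by (apply sin_gt_0; lra).
  assert (Hpb : 0 < Derive f b) by apply hf.
  assert (Hpt : 0 < Derive f t) by apply hf.
  assert (EX := sin2_cos2 ((t - b) / 2)).
  assert (EY := sin2_cos2 ((f t - f b) / 2)).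
  unfold Rsqr in EX, EY.
  unfold Phi. auto_derive.
  - repeat split; try (exists (Derive f t); apply lift_d0; auto);
      unfold Rminus, Rdiv in *; lra.
  - change (fun x : R => f x) with f.
    unfold Rminus, Rdiv in *.
    set (sY := sin ((f t + - f b) * / 2)) in *.
    set (cY := cos ((f t + - f b) * / 2)) in *.
    set (sX := sin ((t + - b) * / 2)) in *.
    set (cX := cos ((t + - b) * / 2)) in *.
    set (pt := Derive f t) in *. set (pb := Derive f b) in *.
    transitivity (- (pt / 2) * (sY * sY + cY * cY) / sY ^ 2
                  + (1 / 2) * (sX * sX + cX * cX) / (sX ^ 2 * pb)).
    + field. repeat split; lra.
    + rewrite EX, EY, <- Hid. field. repeat split; nra.
Qed.

Lemma Phi_const (c : R) (f : R -> R) (b t t' : R) :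
  c <> 0 -> is_lift f -> is_isom c f ->
  b < t < b + 2 * PI -> b < t' < b + 2 * PI -> Phi f b t = Phi f b t'.
Proof.
  intros hc hf hi Ht Ht'.
  apply (const_on_interval (Phi f b) b (b + 2 * PI)); auto.
  intros x Hx. apply (Phi_dt c); auto.
Qed.

Lemma Phi_db (c : R) (f : R -> R) (b0 t : R) :
  c <> 0 -> is_lift f -> is_isom c f -> b0 < t < b0 + 2 * PI ->
  is_derive (fun b => Phi f b t) b0
    (Derive f b0 / 2 / sin ((f t - f b0) / 2) ^ 2
     - 1 / (2 * Derive f b0 * sin ((t - b0) / 2) ^ 2)
     + cos ((t - b0) / 2) / sin ((t - b0) / 2) * Derive_n f 2 b0 / Derive f b0 ^ 2).
Proof.
  intros hc hf hi Ht.
  assert (Hp := PI_RGT_0).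
  destruct (iso_identity c f t b0 hc hf hi Ht) as [Hr Hid].
  assert (HsX : 0 < sin ((t - b0) / 2)) by (apply sin_gt_0; lra).
  assert (HsY : 0 < sin ((f t - f b0) / 2)) by (apply sin_gt_0; lra).
  assert (Hpb : 0 < Derive f b0) by apply hf.
  assert (EX := sin2_cos2 ((t - b0) / 2)).
  assert (EY := sin2_cos2 ((f t - f b0) / 2)).
  unfold Rsqr in EX, EY.
  assert (D1 := lift_d1 f b0 hf).
  unfold Phi. auto_derive.
  - repeat split; try (exists (Derive f b0); apply lift_d0; auto);
      try (eexists; exact D1);
      unfold Rminus, Rdiv in *; lra.
  - change (fun x : R => f x) with f.
    change (fun x : R => Derive f x) with (Derive f).
    rewrite (is_derive_unique _ _ _ D1).
    unfold Rminus, Rdiv in *.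
    set (sY := sin ((f t + - f b0) * / 2)) in *.
    set (cY := cos ((f t + - f b0) * / 2)) in *.
    set (sX := sin ((t + - b0) * / 2)) in *.
    set (cX := cos ((t + - b0) * / 2)) in *.
    set (pb := Derive f b0) in *.
    transitivity ((pb / 2) * (sY * sY + cY * cY) / sY ^ 2
                  - (1 / 2) * (sX * sX + cX * cX) / (sX ^ 2 * pb)
                  + cX / sX * Derive_n f 2 b0 / pb ^ 2).
    + field. repeat split; lra.
    + rewrite EX, EY. field. repeat split; lra.
Qed.


Lemma sqrt2_facts : 0 < sqrt 2 /\ sqrt 2 * sqrt 2 = 2.
Proof. split. apply sqrt_lt_R0; lra. apply sqrt_sqrt; lra. Qed.

Lemma C_formula (c : R) (f : R -> R) (b0 : R) :
  c <> 0 -> is_lift f -> is_isom c f ->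
  Phi f b0 (b0 + PI) = - Derive_n f 2 b0 / Derive f b0 ^ 2.
Proof.
  intros hc hf hi.
  assert (Hp := PI_RGT_0).
  assert (Hloc : locally b0 (fun b => Phi f b (b0 + PI) = Phi f b (b0 + PI / 2))).
  { apply (locally_interval b0 (b0 - PI / 2) (b0 + PI / 2)); [lra|].
    intros y Hy. apply (Phi_const c); auto; lra. }
  assert (H0 := Phi_db c f b0 (b0 + PI) hc hf hi ltac:(lra)).
  assert (H1 := Phi_db c f b0 (b0 + PI / 2) hc hf hi ltac:(lra)).
  assert (E := derive_unique_loc _ _ _ _ _ Hloc H0 H1).
  assert (Ec : Phi f b0 (b0 + PI) = Phi f b0 (b0 + PI / 2)) by (apply (Phi_const c); auto; lra).
  unfold Phi in Ec |- *.
  replace ((b0 + PI - b0) / 2) with (PI / 2) in * by field.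
  replace ((b0 + PI / 2 - b0) / 2) with (PI / 4) in * by field.
  rewrite cos_PI2, sin_PI2, cos_PI4, sin_PI4 in *.
  destruct sqrt2_facts as [Hs1 Hs2].
  destruct (iso_identity c f (b0 + PI) b0 hc hf hi ltac:(lra)) as [R0 _].
  destruct (iso_identity c f (b0 + PI / 2) b0 hc hf hi ltac:(lra)) as [R1 _].
  assert (HsY0 : 0 < sin ((f (b0 + PI) - f b0) / 2)) by (apply sin_gt_0; lra).
  assert (HsY1 : 0 < sin ((f (b0 + PI / 2) - f b0) / 2)) by (apply sin_gt_0; lra).
  assert (Hpb : 0 < Derive f b0) by apply hf.
  set (Y0 := (f (b0 + PI) - f b0) / 2) in *.
  set (Y1 := (f (b0 + PI / 2) - f b0) / 2) in *.
  assert (I0 := inv_sin2 Y0 ltac:(lra)).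
  assert (I1 := inv_sin2 Y1 ltac:(lra)).
  set (K0 := cos Y0 / sin Y0) in *.
  set (K1 := cos Y1 / sin Y1) in *.
  set (p := Derive f b0) in *. set (q := Derive_n f 2 b0) in *.
  assert (EK1 : K1 = K0 + 1 / p).
  { replace (0 / 1 / p) with 0 in Ec by (field; lra).
    replace (1 / sqrt 2 / (1 / sqrt 2) / p) with (1 / p) in Ec by (field; lra).
    lra. }
  replace (p / 2 / sin Y0 ^ 2) with (p / 2 * / sin Y0 ^ 2) in E by (field; lra).
  replace (p / 2 / sin Y1 ^ 2) with (p / 2 * / sin Y1 ^ 2) in E by (field; lra).
  rewrite I0, I1, EK1 in E.
  replace (0 / 1 / p) with 0 by (field; lra).
  replace (1 / (2 * p * 1 ^ 2)) with (1 / (2 * p)) in E by (field; lra).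
  assert (Q2 : (1 / sqrt 2) ^ 2 = 1 / 2).
  { replace ((1 / sqrt 2) ^ 2) with (/ (sqrt 2 * sqrt 2)) by (field; lra). rewrite Hs2. field. }
  rewrite Q2 in E.
  replace (1 / (2 * p * (1 / 2))) with (1 / p) in E by (field; lra).
  replace (0 / 1 * q / p ^ 2) with 0 in E by (field; lra).
  replace (1 / sqrt 2 / (1 / sqrt 2) * q / p ^ 2) with (q / p ^ 2) in E by (field; lra).
  assert (Z : K0 + q / p ^ 2 = 0).
  { replace (K0 + q / p ^ 2) with
      (p / 2 * (1 + (K0 + 1 / p) ^ 2) - 1 / p + q / p ^ 2
       - (p / 2 * (1 + K0 ^ 2) - 1 / (2 * p) + 0)) by (field; lra).
    lra. }
  replace (K0 - 0) with K0 by ring.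
  replace (- q / p ^ 2) with (- (q / p ^ 2)) by (field; lra). lra.
Qed.

Lemma d_ratio (p q : R -> R) (x dp dq : R) :
  is_derive p x dp -> is_derive q x dq -> p x <> 0 ->
  is_derive (fun y => - q y / p y ^ 2) x (- dq / p x ^ 2 + 2 * q x * dp / p x ^ 3).
Proof.
  intros Hp Hq Hn.
  auto_derive.
  - repeat split; auto; eexists; eauto.
  - change (fun x0 : R => p x0) with p. change (fun x0 : R => q x0) with q.
    rewrite (is_derive_unique _ _ _ Hp), (is_derive_unique _ _ _ Hq).
    field. auto.
Qed.

Theorem isom_ker (c : R) (f : R -> R) :
  c <> 0 -> is_lift f -> is_isom c f -> in_ker_Sc c f.
Proof.
  intros hc hf hi b0.
  assert (Hp := PI_RGT_0).
  assert (Hloc : locally b0 (fun b => Phi f b (b0 + PI) = - Derive_n f 2 b / Derive f b ^ 2)).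
  { apply (locally_interval b0 (b0 - PI / 2) (b0 + PI / 2)); [lra|].
    intros y Hy. rewrite <- (C_formula c f y); auto. apply (Phi_const c); auto; lra. }
  assert (H0 := Phi_db c f b0 (b0 + PI) hc hf hi ltac:(lra)).
  assert (Hpb : 0 < Derive f b0) by apply hf.
  assert (H1 := d_ratio (Derive f) (Derive_n f 2) b0 _ _ (lift_d1 f b0 hf) (lift_d2 f b0 hf) ltac:(lra)).
  assert (E := derive_unique_loc _ _ _ _ _ Hloc H0 H1).
  assert (Ec := C_formula c f b0 hc hf hi).
  unfold Phi in Ec.
  replace ((b0 + PI - b0) / 2) with (PI / 2) in * by field.
  rewrite cos_PI2, sin_PI2 in *.
  destruct (iso_identity c f (b0 + PI) b0 hc hf hi ltac:(lra)) as [R0 _].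
  assert (HsY0 : 0 < sin ((f (b0 + PI) - f b0) / 2)) by (apply sin_gt_0; lra).
  set (Y0 := (f (b0 + PI) - f b0) / 2) in *.
  assert (I0 := inv_sin2 Y0 ltac:(lra)).
  set (K0 := cos Y0 / sin Y0) in *.
  set (p := Derive f b0) in *. set (q := Derive_n f 2 b0) in *.
  set (r := Derive_n f 3 b0) in *.
  replace (p / 2 / sin Y0 ^ 2) with (p / 2 * / sin Y0 ^ 2) in E by (field; lra).
  rewrite I0 in E.
  assert (EK : K0 = - (q / p ^ 2)).
  { replace (0 / 1 / p) with 0 in Ec by (field; lra).
    replace (- q / p ^ 2) with (- (q / p ^ 2)) in Ec by (field; lra). lra. }
  rewrite EK in E.
  replace (1 / (2 * p * 1 ^ 2)) with (1 / (2 * p)) in E by (field; lra).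
  replace (0 / 1 * q / p ^ 2) with 0 in E by (field; lra).
  unfold Sc. fold p q r.
  replace (r / p - 3 / 2 * (q / p) ^ 2 + 1 / 2 * (p ^ 2 - 1)) with
    ((- p) * ((- r / p ^ 2 + 2 * q * q / p ^ 3)
              - (p / 2 * (1 + (- (q / p ^ 2)) ^ 2) - 1 / (2 * p) + 0))) by (field; lra).
  rewrite <- E. ring.
Qed.


Inductive tex : Type :=
  | TC (r : R) | TCos | TSin | TInv | TAdd (e1 e2 : tex) | TMul (e1 e2 : tex).

Definition nabc (al be ga x : R) : R := al + be * cos x + ga * sin x.

Fixpoint tev (al be ga : R) (e : tex) (x : R) : R :=
  match e with
  | TC r => r
  | TCos => cos x
  | TSin => sin x
  | TInv => / nabc al be ga x
  | TAdd e1 e2 => tev al be ga e1 x + tev al be ga e2 x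
  | TMul e1 e2 => tev al be ga e1 x * tev al be ga e2 x
  end.

Fixpoint tder (be ga : R) (e : tex) : tex :=
  match e with
  | TC _ => TC 0
  | TCos => TMul (TC (-1)) TSin
  | TSin => TCos
  | TInv => TMul (TMul (TC (-1)) (TAdd (TMul (TC (- be)) TSin) (TMul (TC ga) TCos)))
                 (TMul TInv TInv)
  | TAdd e1 e2 => TAdd (tder be ga e1) (tder be ga e2)
  | TMul e1 e2 => TAdd (TMul (tder be ga e1) e2) (TMul e1 (tder be ga e2))
  end.

Lemma tder_ok (al be ga : R) :
  (forall x, nabc al be ga x <> 0) ->
  forall e x, is_derive (tev al be ga e) x (tev al be ga (tder be ga e) x).
Proof.
  intros Hn e. induction e; intros x; simpl.
  - apply is_derive_Reals. apply derivable_pt_lim_const.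
  - auto_derive; auto. ring.
  - auto_derive; auto. ring.
  - specialize (Hn x). unfold nabc in *. auto_derive; auto. field; auto.
  - apply is_derive_Reals. apply (derivable_pt_lim_plus (tev al be ga e1) (tev al be ga e2));
      apply is_derive_Reals; auto.
  - apply is_derive_Reals. apply (derivable_pt_lim_mult (tev al be ga e1) (tev al be ga e2));
      apply is_derive_Reals; auto.
Qed.

Lemma Derive_n_tev (al be ga : R) :
  (forall x, nabc al be ga x <> 0) ->
  forall k e, Derive_n (tev al be ga e) k = tev al be ga (Nat.iter k (tder be ga) e).
Proof.
  intros Hn k. induction k; intros e.
  - reflexivity.
  - apply functional_extensionality. intros x.
    change (Derive (Derive_n (tev al be ga e) k) x = tev al be ga (tder be ga (Nat.iter k (tder be ga) e)) x).
    rewrite IHk. apply is_derive_unique. apply tder_ok; auto.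
Qed.

Lemma smooth_tev (al be ga : R) e :
  (forall x, nabc al be ga x <> 0) -> smooth (tev al be ga e).
Proof.
  intros Hn n x. rewrite Derive_n_tev; auto. eexists. apply tder_ok; auto.
Qed.

Lemma Derive_n_of_deriv (g h : R -> R) :
  (forall x, is_derive g x (h x)) -> forall n x, Derive_n g (S n) x = Derive_n h n x.
Proof.
  intros Hd n. induction n; intros x.
  - simpl. apply is_derive_unique. apply Hd.
  - change (Derive (Derive_n g (S n)) x = Derive (Derive_n h n) x).
    f_equal. apply functional_extensionality. apply IHn.
Qed.

Lemma smooth_of_deriv (g h : R -> R) :
  (forall x, is_derive g x (h x)) -> smooth h -> smooth g.
Proof.
  intros Hd Hh n x. destruct n.
  - eexists. apply Hd.
  - assert (E : Derive_n g (S n) = Derive_n h n).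
    { apply functional_extensionality. apply Derive_n_of_deriv; auto. }
    rewrite E. apply Hh.
Qed.


Definition alA (A : mat2) : R := ((m11 A ^ 2 + m21 A ^ 2) + (m12 A ^ 2 + m22 A ^ 2)) / 2.
Definition beA (A : mat2) : R := ((m11 A ^ 2 + m21 A ^ 2) - (m12 A ^ 2 + m22 A ^ 2)) / 2.
Definition gaA (A : mat2) : R := m11 A * m12 A + m21 A * m22 A.
Definition nA (A : mat2) (x : R) : R := nabc (alA A) (beA A) (gaA A) x.
Definition z1 (A : mat2) (x : R) : R := m11 A * cos (x / 2) + m12 A * sin (x / 2).
Definition z2 (A : mat2) (x : R) : R := m21 A * cos (x / 2) + m22 A * sin (x / 2).

Lemma cs_half x : cos (x / 2) ^ 2 + sin (x / 2) ^ 2 = 1.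
Proof. assert (H := sin2_cos2 (x / 2)). unfold Rsqr in H. lra. Qed.

Lemma nA_half (A : mat2) x : nA A x = z1 A x ^ 2 + z2 A x ^ 2.
Proof.
  unfold nA, nabc, z1, z2, alA, beA, gaA.
  assert (Hcs := cs_half x).
  replace x with (2 * (x / 2)) at 1 2 by field.
  rewrite cos_2a, sin_2a.
  set (c := cos (x / 2)) in *. set (s := sin (x / 2)) in *.
  destruct A as [a b cc d]; cbn [m11 m12 m21 m22].
  replace ((a ^ 2 + cc ^ 2 + (b ^ 2 + d ^ 2)) / 2) with
    ((a ^ 2 + cc ^ 2 + (b ^ 2 + d ^ 2)) / 2 * (c ^ 2 + s ^ 2)) by (rewrite Hcs; ring).
  field.
Qed.

Lemma sq0 x : x ^ 2 = 0 -> x = 0.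
Proof. intros H. destruct (Req_dec x 0); auto. assert (0 < x ^ 2) by (apply pow2_gt_0; auto). lra. Qed.

Lemma z_nonzero (A : mat2) x : mdet A = 1 -> 0 < z1 A x ^ 2 + z2 A x ^ 2.
Proof.
  intros Hd. assert (Hcs := cs_half x). unfold z1, z2.
  destruct A as [a b cc d]; unfold mdet in Hd; cbn [m11 m12 m21 m22] in *.
  set (c := cos (x / 2)) in *. set (s := sin (x / 2)) in *.
  destruct (Rle_or_lt (z1 (Mat2 a b cc d) x ^ 2 + z2 (Mat2 a b cc d) x ^ 2) 0) as [H|H];
    unfold z1, z2 in H; cbn [m11 m12 m21 m22] in H; fold c s in H; [|exact H].
  exfalso.
  assert (G1 := pow2_ge_0 (a * c + b * s)). assert (G2 := pow2_ge_0 (cc * c + d * s)).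
  assert (H1 : a * c + b * s = 0) by (apply sq0; lra).
  assert (H2 : cc * c + d * s = 0) by (apply sq0; lra).
  assert (Ec : c = d * (a * c + b * s) - b * (cc * c + d * s)).
  { replace c with (c * (a * d - b * cc)) at 1 by (rewrite Hd; ring). ring. }
  assert (Es : s = a * (cc * c + d * s) - cc * (a * c + b * s)).
  { replace s with (s * (a * d - b * cc)) at 1 by (rewrite Hd; ring). ring. }
  rewrite H1, H2 in Ec, Es. nra.
Qed.

Lemma nA_pos (A : mat2) x : mdet A = 1 -> 0 < nA A x.
Proof. intros Hd. rewrite nA_half. apply z_nonzero; auto. Qed.

Lemma abc_rel (A : mat2) : mdet A = 1 -> alA A ^ 2 - beA A ^ 2 - gaA A ^ 2 = 1.
Proof.
  intros Hd. destruct A as [a b cc d]; unfold mdet in Hd; unfold alA, beA, gaA; cbn [m11 m12 m21 m22] in *.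
  replace 1 with ((a * d - b * cc) ^ 2) by (rewrite Hd; ring). field.
Qed.

Definition thetaA (A : mat2) : R :=
  if Req_EM_T (m11 A) 0 then PI else 2 * atan (m21 A / m11 A).

Definition FA (A : mat2) (x : R) : R := thetaA A + RInt (fun t => / nA A t) 0 x.

Lemma inv_nA_tev (A : mat2) : (fun t => / nA A t) = tev (alA A) (beA A) (gaA A) TInv.
Proof. reflexivity. Qed.

Lemma nabc_ne (A : mat2) : mdet A = 1 -> forall x, nabc (alA A) (beA A) (gaA A) x <> 0.
Proof. intros Hd x. assert (H := nA_pos A x Hd). unfold nA in H. lra. Qed.

Lemma inv_nA_deriv (A : mat2) x : mdet A = 1 -> ex_derive (fun t => / nA A t) x.
Proof. intros Hd. rewrite inv_nA_tev. eexists. apply tder_ok. apply nabc_ne; auto. Qed.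

Lemma inv_nA_cont (A : mat2) x : mdet A = 1 -> continuous (fun t => / nA A t) x.
Proof. intros Hd. apply (ex_derive_continuous (V := R_NormedModule)). apply inv_nA_deriv; auto. Qed.

Lemma FA_deriv (A : mat2) x : mdet A = 1 -> is_derive (FA A) x (/ nA A x).
Proof.
  intros Hd. unfold FA.
  assert (H : is_derive (fun y => RInt (fun t => / nA A t) 0 y) x (/ nA A x)).
  { apply (is_derive_RInt (fun t => / nA A t) (fun y => RInt (fun t => / nA A t) 0 y) 0 x).
    - exists (mkposreal 1 Rlt_0_1). intros y _. apply (RInt_correct (V := R_CompleteNormedModule)).
      apply (ex_RInt_continuous (V := R_CompleteNormedModule)). intros z _. apply inv_nA_cont; auto.
    - apply inv_nA_cont; auto. }
  apply is_derive_Reals. apply is_derive_Reals in H.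
  replace (/ nA A x) with (0 + / nA A x) by ring.
  apply (derivable_pt_lim_plus (fun _ => thetaA A) (fun y => RInt (fun t => / nA A t) 0 y)); auto.
  apply derivable_pt_lim_const.
Qed.

Lemma FA_smooth (A : mat2) : mdet A = 1 -> smooth (FA A).
Proof.
  intros Hd. apply (smooth_of_deriv _ (fun t => / nA A t)).
  - intros; apply FA_deriv; auto.
  - rewrite inv_nA_tev. apply smooth_tev. apply nabc_ne; auto.
Qed.

Lemma FA_0 (A : mat2) : FA A 0 = thetaA A.
Proof. unfold FA. rewrite RInt_point. simpl. unfold zero; simpl. ring. Qed.

Definition crossU (g : R -> R) (A : mat2) (x : R) : R :=
  cos (g x / 2) * z2 A x - sin (g x / 2) * z1 A x.

Lemma crossU_deriv (g : R -> R) (A : mat2) x :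
  mdet A = 1 -> is_derive g x (/ nA A x) ->
  is_derive (fun y => crossU g A y ^ 2 / (z1 A y ^ 2 + z2 A y ^ 2)) x 0.
Proof.
  intros Hd Hg.
  assert (Hn := z_nonzero A x Hd).
  rewrite nA_half in Hg.
  assert (Hcs := cs_half x).
  unfold crossU, z1, z2 in *.
  destruct A as [a b cc d]; unfold mdet in Hd; cbn [m11 m12 m21 m22] in *.
  auto_derive.
  - repeat split; try (eexists; exact Hg). lra.
  - change (fun x0 : R => g x0) with g.
    rewrite (is_derive_unique _ _ _ Hg).
    set (c := cos (x / 2)) in *. set (s := sin (x / 2)) in *.
    unfold Rdiv in *.
    set (c' := cos (x * / 2)) in *. set (s' := sin (x * / 2)) in *.
    set (U1 := cos (g x * / 2)). set (U2 := sin (g x * / 2)).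
    unfold c, s in *.
    set (W := (a * c' + b * s') * (cc * (- s' / 2) + d * (c' / 2))
              - (cc * c' + d * s') * (a * (- s' / 2) + b * (c' / 2))).
    assert (HW : 2 * W - 1 = 0).
    { replace (2 * W) with ((a * d - b * cc) * (c' ^ 2 + s' ^ 2)) by (unfold W; field).
      rewrite Hd, Hcs. ring. }
    transitivity ((U1 * (cc * c' + d * s') - U2 * (a * c' + b * s')) * (2 * W - 1)
                  * (U1 * (a * c' + b * s') + U2 * (cc * c' + d * s'))
                  / ((a * c' + b * s') ^ 2 + (cc * c' + d * s') ^ 2) ^ 2).
    + unfold W. field. lra.
    + rewrite HW. field. lra.
Qed.

Lemma AP_general (g : R -> R) (A : mat2) :
  mdet A = 1 -> (forall x, is_derive g x (/ nA A x)) -> crossU g A 0 = 0 ->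
  forall x, crossU g A x = 0.
Proof.
  intros Hd Hg H0 x.
  assert (E := const_all _ (fun y => crossU_deriv g A y Hd (Hg y)) x 0).
  cbv beta in E. rewrite H0 in E.
  assert (Hn := z_nonzero A x Hd).
  assert (E2 : crossU g A x ^ 2 = 0).
  { replace (crossU g A x ^ 2) with
      (crossU g A x ^ 2 / (z1 A x ^ 2 + z2 A x ^ 2) * (z1 A x ^ 2 + z2 A x ^ 2)) by (field; lra).
    rewrite E. field. assert (Hn0 := z_nonzero A 0 Hd). lra. }
  apply sq0; auto.
Qed.

Lemma thetaA_ok (A : mat2) : crossU (FA A) A 0 = 0.
Proof.
  unfold crossU. rewrite FA_0. unfold z1, z2.
  replace (0 / 2) with 0 by field. rewrite cos_0, sin_0.
  unfold thetaA. destruct (Req_EM_T (m11 A) 0) as [H|H].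
  - rewrite H. replace (PI / 2) with (PI / 2) by reflexivity. rewrite cos_PI2, sin_PI2. ring.
  - replace (2 * atan (m21 A / m11 A) / 2) with (atan (m21 A / m11 A)) by field.
    assert (Ht := tan_atan (m21 A / m11 A)). unfold tan in Ht.
    assert (Hc : 0 < cos (atan (m21 A / m11 A))).
    { rewrite cos_atan. apply Rdiv_lt_0_compat; [lra|]. apply sqrt_lt_R0.
      assert (0 <= (m21 A / m11 A)²) by apply Rle_0_sqr. lra. }
    replace (sin (atan (m21 A / m11 A))) with (m21 A / m11 A * cos (atan (m21 A / m11 A))).
    + field. auto.
    + set (t := atan (m21 A / m11 A)) in *. rewrite <- Ht. field. lra.
Qed.

Lemma FA_AP (A : mat2) : mdet A = 1 -> forall x, crossU (FA A) A x = 0.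
Proof.
  intros Hd. apply AP_general; auto.
  - intros; apply FA_deriv; auto.
  - apply thetaA_ok.
Qed.


Lemma int_half_contra (j k : Z) : 2 * IZR j = 2 * IZR k + 1 -> False.
Proof.
  intros H. assert (E : IZR (2 * j) = IZR (2 * k + 1)).
  { rewrite plus_IZR, !mult_IZR. simpl. lra. }
  apply eq_IZR in E. lia.
Qed.

Lemma discrete_const (g : R -> R) :
  (forall x, ex_derive g x) -> (forall x, sin (g x / 2) = 0) ->
  exists k : Z, forall x, g x = 2 * PI * IZR k.
Proof.
  intros Hd Hs.
  assert (Hp := PI_RGT_0).
  assert (Hc : forall x, continuous g x).
  { intros x. apply (ex_derive_continuous (V := R_NormedModule)). apply Hd. }
  assert (Hz : forall x, exists k : Z, g x = 2 * PI * IZR k).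
  { intros x. destruct (sin_eq_0_0 _ (Hs x)) as [k Hk]. exists k. lra. }
  destruct (Hz 0) as [k0 Hk0]. exists k0. intros y.
  destruct (Hz y) as [m Hm].
  destruct (Z.lt_total m k0) as [Hlt|[Heq|Hgt]].
  - exfalso.
    assert (Hr : IZR m + 1 <= IZR k0) by (rewrite <- plus_IZR; apply IZR_le; lia).
    destruct (IVT_gen_consistent g 0 y (2 * PI * IZR k0 - PI) Hc) as [z [_ Hz']].
    { split.
      - apply Rle_trans with (g y); [apply Rmin_r|]. rewrite Hm. nra.
      - apply Rle_trans with (g 0); [|apply Rmax_l]. rewrite Hk0. lra. }
    destruct (Hz z) as [j Hj]. rewrite Hz' in Hj.
    apply (int_half_contra j (k0 - 1)). rewrite minus_IZR.
    apply Rmult_eq_reg_l with PI; [|lra]. simpl. nra.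
  - subst; auto.
  - exfalso.
    assert (Hr : IZR k0 + 1 <= IZR m) by (rewrite <- plus_IZR; apply IZR_le; lia).
    destruct (IVT_gen_consistent g 0 y (2 * PI * IZR k0 + PI) Hc) as [z [_ Hz']].
    { split.
      - apply Rle_trans with (g 0); [apply Rmin_l|]. rewrite Hk0. lra.
      - apply Rle_trans with (g y); [|apply Rmax_r]. rewrite Hm. nra. }
    destruct (Hz z) as [j Hj]. rewrite Hz' in Hj.
    apply (int_half_contra j k0).
    apply Rmult_eq_reg_l with PI; [|lra]. nra.
Qed.

Lemma par_vec (u1 u2 w1 w2 : R) :
  u1 ^ 2 + u2 ^ 2 = 1 -> u1 * w2 - u2 * w1 = 0 ->
  w1 = (u1 * w1 + u2 * w2) * u1 /\ w2 = (u1 * w1 + u2 * w2) * u2.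
Proof.
  intros Hu Hc. split.
  - replace w1 with (w1 * (u1 ^ 2 + u2 ^ 2)) at 1 by (rewrite Hu; ring).
    replace (w1 * (u1 ^ 2 + u2 ^ 2)) with (u1 * u1 * w1 + u2 * (u2 * w1)) by ring.
    replace (u2 * w1) with (u1 * w2) by lra. ring.
  - replace w2 with (w2 * (u1 ^ 2 + u2 ^ 2)) at 1 by (rewrite Hu; ring).
    replace (w2 * (u1 ^ 2 + u2 ^ 2)) with (u1 * (u1 * w2) + u2 * u2 * w2) by ring.
    replace (u1 * w2) with (u2 * w1) by lra. ring.
Qed.

Lemma cross_rel (u1 u2 w1 w2 u1' u2' w1' w2' : R) :
  u1 ^ 2 + u2 ^ 2 = 1 -> u1 * w2 - u2 * w1 = 0 ->
  u1' ^ 2 + u2' ^ 2 = 1 -> u1' * w2' - u2' * w1' = 0 ->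
  (w1 * w2' - w2 * w1') ^ 2 = (w1 ^ 2 + w2 ^ 2) * (w1' ^ 2 + w2' ^ 2) * (u1 * u2' - u2 * u1') ^ 2.
Proof.
  intros Hu Hc Hu' Hc'.
  destruct (par_vec _ _ _ _ Hu Hc) as [E1 E2].
  destruct (par_vec _ _ _ _ Hu' Hc') as [E1' E2'].
  set (l := u1 * w1 + u2 * w2) in *. set (l' := u1' * w1' + u2' * w2') in *.
  rewrite E1, E2, E1', E2'.
  replace ((l * u1) ^ 2 + (l * u2) ^ 2) with (l ^ 2 * (u1 ^ 2 + u2 ^ 2)) by ring.
  replace ((l' * u1') ^ 2 + (l' * u2') ^ 2) with (l' ^ 2 * (u1' ^ 2 + u2' ^ 2)) by ring.
  rewrite Hu, Hu'. ring.
Qed.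

Lemma cross_trig (a b : R) : cos a * sin b - sin a * cos b = sin (b - a).
Proof. rewrite sin_minus. ring. Qed.

Lemma unit_trig (a : R) : cos a ^ 2 + sin a ^ 2 = 1.
Proof. assert (H := sin2_cos2 a). unfold Rsqr in H. lra. Qed.

Lemma z_cross (A : mat2) (x y : R) : mdet A = 1 ->
  z1 A x * z2 A y - z2 A x * z1 A y = sin ((y - x) / 2).
Proof.
  intros Hd. unfold z1, z2.
  replace ((y - x) / 2) with (y / 2 - x / 2) by field. rewrite <- cross_trig.
  destruct A as [a b cc d]; unfold mdet in Hd; cbn [m11 m12 m21 m22] in *.
  replace (cos (x / 2) * sin (y / 2) - sin (x / 2) * cos (y / 2)) with
    ((a * d - b * cc) * (cos (x / 2) * sin (y / 2) - sin (x / 2) * cos (y / 2))) by (rewrite Hd; ring).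
  ring.
Qed.

Lemma AP_sin_rel (g : R -> R) (A : mat2) (x y : R) : mdet A = 1 ->
  crossU g A x = 0 -> crossU g A y = 0 ->
  sin ((y - x) / 2) ^ 2 = nA A x * nA A y * sin ((g y - g x) / 2) ^ 2.
Proof.
  intros Hd Hx Hy. rewrite <- (z_cross A x y Hd). rewrite !nA_half.
  replace ((g y - g x) / 2) with (g y / 2 - g x / 2) by field. rewrite <- cross_trig.
  apply cross_rel; auto using unit_trig.
Qed.

Lemma FA_sin_rel (A : mat2) (x y : R) : mdet A = 1 ->
  sin ((y - x) / 2) ^ 2 = nA A x * nA A y * sin ((FA A y - FA A x) / 2) ^ 2.
Proof. intros Hd. apply AP_sin_rel; auto; apply FA_AP; auto. Qed.

Lemma sin_half_zero_iff (A : mat2) (x y : R) : mdet A = 1 ->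
  (sin ((y - x) / 2) = 0 <-> sin ((FA A y - FA A x) / 2) = 0).
Proof.
  intros Hd. assert (E := FA_sin_rel A x y Hd).
  assert (Nx := nA_pos A x Hd). assert (Ny := nA_pos A y Hd).
  split; intros H.
  - rewrite H in E. apply sq0.
    assert (0 < nA A x * nA A y) by (apply Rmult_lt_0_compat; auto).
    assert (G := pow2_ge_0 (sin ((FA A y - FA A x) / 2))).
    simpl in E. nra.
  - apply sq0. rewrite E, H. ring.
Qed.

Lemma FA_incr (A : mat2) : mdet A = 1 -> forall x y, x < y -> FA A x < FA A y.
Proof.
  intros Hd. apply (strict_incr _ (fun t => / nA A t)).
  - intros; apply FA_deriv; auto.
  - intros; apply Rinv_0_lt_compat; apply nA_pos; auto.
Qed.

Lemma FA_periodic (A : mat2) : mdet A = 1 -> forall x, FA A (x + 2 * PI) = FA A x + 2 * PI.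
Proof.
  intros Hd.
  assert (Hp := PI_RGT_0).
  destruct (discrete_const (fun x => FA A (x + 2 * PI) - FA A x)) as [k Hk].
  - intros x. auto_derive. repeat split; eexists; apply FA_deriv; auto.
  - intros x. apply (sin_half_zero_iff A x (x + 2 * PI) Hd).
    replace ((x + 2 * PI - x) / 2) with PI by field. apply sin_PI.
  - assert (Hpos : 0 < IZR k).
    { assert (H0 := Hk 0). assert (Hi := FA_incr A Hd 0 (0 + 2 * PI) ltac:(lra)).
      apply Rmult_lt_reg_l with (2 * PI); [lra|]. lra. }
    apply lt_IZR in Hpos.
    destruct (Z.eq_dec k 1) as [E|E].
    + intros x. specialize (Hk x). subst k. simpl in Hk. lra.
    + exfalso.
      assert (Hk2 : 2 <= IZR k) by (apply IZR_le; lia).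
      assert (H0 := Hk 0). replace (0 + 2 * PI) with (2 * PI) in H0 by ring.
      assert (Hc : forall x, continuous (FA A) x).
      { intros x. apply (ex_derive_continuous (V := R_NormedModule)). eexists; apply FA_deriv; auto. }
      destruct (IVT_gen_consistent (FA A) 0 (2 * PI) (FA A 0 + 2 * PI) Hc) as [y [Hy Hy']].
      { split.
        - apply Rle_trans with (FA A 0); [apply Rmin_l|]. lra.
        - apply Rle_trans with (FA A (2 * PI)); [|apply Rmax_r]. nra. }
      rewrite Rmin_left in Hy by lra. rewrite Rmax_right in Hy by lra.
      assert (Hs : sin ((y - 0) / 2) = 0).
      { apply (sin_half_zero_iff A 0 y Hd). rewrite Hy'.
        replace ((FA A 0 + 2 * PI - FA A 0) / 2) with PI by field. apply sin_PI. }
      destruct (Req_dec y 0) as [Y0|Y0].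
      { subst y. lra. }
      destruct (Req_dec y (2 * PI)) as [Y1|Y1].
      { subst y. nra. }
      assert (0 < sin ((y - 0) / 2)) by (apply sin_gt_0; lra). lra.
Qed.

Lemma FA_lift (A : mat2) : mdet A = 1 -> is_lift (FA A).
Proof.
  intros Hd. split; [apply FA_smooth; auto|]. split.
  - apply FA_periodic; auto.
  - intros x. rewrite (is_derive_unique _ _ _ (FA_deriv A x Hd)).
    apply Rinv_0_lt_compat; apply nA_pos; auto.
Qed.

Lemma offdiag_sin (t1 t2 : R) : offdiag t1 t2 -> sin ((t1 - t2) / 2) <> 0.
Proof.
  intros Ho Hs. destruct (sin_eq_0_0 _ Hs) as [k Hk]. apply (Ho k). lra.
Qed.

Lemma FA_isom (c : R) (A : mat2) : mdet A = 1 -> is_isom c (FA A).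
Proof.
  intros Hd t1 t2 Ho.
  assert (Hs := offdiag_sin t1 t2 Ho).
  assert (E := FA_sin_rel A t2 t1 Hd).
  assert (N1 := nA_pos A t1 Hd). assert (N2 := nA_pos A t2 Hd).
  rewrite (is_derive_unique _ _ _ (FA_deriv A t1 Hd)).
  rewrite (is_derive_unique _ _ _ (FA_deriv A t2 Hd)).
  unfold gc. rewrite !chord2_eq. rewrite E.
  assert (Hs2 : sin ((FA A t1 - FA A t2) / 2) <> 0).
  { intros H. apply Hs. apply sq0. rewrite E, H. ring. }
  field. repeat split; lra.
Qed.


Lemma FA_Derive (A : mat2) : mdet A = 1 -> Derive (FA A) = tev (alA A) (beA A) (gaA A) TInv.
Proof.
  intros Hd. apply functional_extensionality. intros x.
  apply is_derive_unique. apply FA_deriv; auto.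
Qed.

Lemma FA_Derive_n (A : mat2) (n : nat) x : mdet A = 1 ->
  Derive_n (FA A) (S n) x = tev (alA A) (beA A) (gaA A) (Nat.iter n (tder (beA A) (gaA A)) TInv) x.
Proof.
  intros Hd. rewrite (Derive_n_of_deriv (FA A) (tev (alA A) (beA A) (gaA A) TInv)).
  - rewrite Derive_n_tev; auto. apply nabc_ne; auto.
  - intros; apply FA_deriv; auto.
Qed.

Lemma FA_Sc (c : R) (A : mat2) : mdet A = 1 -> in_ker_Sc c (FA A).
Proof.
  intros Hd x. unfold Sc.
  change (Derive (FA A) x) with (Derive_n (FA A) 1 x).
  rewrite !FA_Derive_n; auto.
  assert (Hr := abc_rel A Hd).
  assert (Hn := nabc_ne A Hd x).
  assert (Hcs := unit_trig x).
  change (Nat.iter 2 (tder (beA A) (gaA A)) TInv) with (tder (beA A) (gaA A) (tder (beA A) (gaA A) TInv)).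
  change (Nat.iter 1 (tder (beA A) (gaA A)) TInv) with (tder (beA A) (gaA A) TInv).
  change (Nat.iter 0 (tder (beA A) (gaA A)) TInv) with TInv.
  cbn [tder tev]. unfold nabc in *.
  set (al := alA A) in *. set (be := beA A) in *. set (ga := gaA A) in *.
  set (co := cos x) in *. set (si := sin x) in *.
  set (n := al + be * co + ga * si) in *.
  rewrite <- (Rmult_0_r c). f_equal.
  transitivity ((- 2 * n * (- be * co - ga * si) + (- be * si + ga * co) ^ 2 + 1 - n ^ 2) / (2 * n ^ 2)).
  - field. auto.
  - replace (- 2 * n * (- be * co - ga * si) + (- be * si + ga * co) ^ 2 + 1 - n ^ 2) with
      ((be ^ 2 + ga ^ 2) * (co ^ 2 + si ^ 2 - 1) - (al ^ 2 - be ^ 2 - ga ^ 2 - 1)) by (unfold n; ring).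
    rewrite Hcs, Hr. field. auto.
Qed.

Lemma mdet_mul (A B : mat2) : mdet (mmul A B) = mdet A * mdet B.
Proof. destruct A, B; unfold mdet, mmul; simpl; ring. Qed.

Lemma par_trans0 (u1 u2 w1 w2 v1 v2 : R) :
  u1 ^ 2 + u2 ^ 2 = 1 -> u1 * w2 - u2 * w1 = 0 -> u1 * v2 - u2 * v1 = 0 ->
  w1 * v2 - w2 * v1 = 0.
Proof.
  intros Hu H1 H2.
  destruct (par_vec _ _ _ _ Hu H1) as [E1 E2].
  destruct (par_vec _ _ _ _ Hu H2) as [E3 E4].
  set (l := u1 * w1 + u2 * w2) in *. set (l' := u1 * v1 + u2 * v2) in *.
  rewrite E1, E2, E3, E4. ring.
Qed.

Lemma cross_zero_of (u1 u2 w1 w2 u1' u2' w1' w2' : R) :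
  u1 ^ 2 + u2 ^ 2 = 1 -> u1 * w2 - u2 * w1 = 0 ->
  u1' ^ 2 + u2' ^ 2 = 1 -> u1' * w2' - u2' * w1' = 0 ->
  0 < w1 ^ 2 + w2 ^ 2 -> 0 < w1' ^ 2 + w2' ^ 2 ->
  w1 * w2' - w2 * w1' = 0 -> u1 * u2' - u2 * u1' = 0.
Proof.
  intros Hu Hc Hu' Hc' Hw Hw' Hz.
  assert (E := cross_rel _ _ _ _ _ _ _ _ Hu Hc Hu' Hc').
  rewrite Hz in E. apply sq0.
  assert (0 < (w1 ^ 2 + w2 ^ 2) * (w1' ^ 2 + w2' ^ 2)) by (apply Rmult_lt_0_compat; auto).
  assert (G := pow2_ge_0 (u1 * u2' - u2 * u1')). simpl in E. nra.
Qed.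

Lemma FA_hom (A B : mat2) : mdet A = 1 -> mdet B = 1 ->
  same_diffeo (FA (mmul A B)) (fun x => FA A (FA B x)).
Proof.
  intros HA HB.
  assert (HAB : mdet (mmul A B) = 1) by (rewrite mdet_mul, HA, HB; ring).
  destruct (discrete_const (fun x => FA A (FA B x) - FA (mmul A B) x)) as [k Hk].
  - intros x. auto_derive. repeat split; eexists; apply FA_deriv; auto.
  - intros x.
    replace ((FA A (FA B x) - FA (mmul A B) x) / 2) with
      (FA A (FA B x) / 2 - FA (mmul A B) x / 2) by field.
    rewrite <- cross_trig.
    assert (H1 := FA_AP A HA (FA B x)).
    assert (H2 := FA_AP B HB x).
    assert (H3 := FA_AP (mmul A B) HAB x).
    unfold crossU in H1, H2, H3.
    apply (cross_zero_of _ _ (z1 (mmul A B) x) (z2 (mmul A B) x) _ _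
             (z1 A (FA B x)) (z2 A (FA B x))); auto using unit_trig.
    + apply z_nonzero; auto.
    + apply z_nonzero; auto.
    + unfold z1, z2 in *.
      destruct A as [a b cc d], B as [a' b' cc' d']; unfold mdet in HA, HB;
        unfold mmul in *; cbn [m11 m12 m21 m22] in *.
      set (U1 := cos (FA (Mat2 a' b' cc' d') x / 2)) in *.
      set (U2 := sin (FA (Mat2 a' b' cc' d') x / 2)) in *.
      set (co := cos (x / 2)) in *. set (si := sin (x / 2)) in *.
      replace ((a * a' + b * cc') * co + (a * b' + b * d') * si) with
        (a * (a' * co + b' * si) + b * (cc' * co + d' * si)) by ring.
      replace ((cc * a' + d * cc') * co + (cc * b' + d * d') * si) with
        (cc * (a' * co + b' * si) + d * (cc' * co + d' * si)) by ring.
      set (w1 := a' * co + b' * si) in *. set (w2 := cc' * co + d' * si) in *.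
      replace ((a * w1 + b * w2) * (cc * U1 + d * U2) - (cc * w1 + d * w2) * (a * U1 + b * U2))
        with (- (a * d - b * cc) * (U1 * w2 - U2 * w1)) by ring.
      rewrite H2. ring.
  - exists k. intros x. specialize (Hk x). cbv beta in Hk. lra.
Qed.

Lemma mat_eq (A : mat2) : A = Mat2 (m11 A) (m12 A) (m21 A) (m22 A).
Proof. destruct A; reflexivity. Qed.

Lemma FA_ker (A : mat2) : mdet A = 1 ->
  (same_diffeo (FA A) (fun x => x) <-> A = mI \/ A = mnegI).
Proof.
  intros Hd. split.
  - intros [k Hk].
    assert (Hc : forall x, cos (x / 2) * z2 A x - sin (x / 2) * z1 A x = 0).
    { intros x. assert (H1 := FA_AP A Hd x). unfold crossU in H1.
      apply (par_trans0 (cos (FA A x / 2)) (sin (FA A x / 2))); auto using unit_trig.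
      rewrite cross_trig. apply sin_eq_0_1. exists k.
      specialize (Hk x). lra. }
    assert (Hp := PI_RGT_0).
    assert (C0 := Hc 0). assert (C1 := Hc PI). assert (C2 := Hc (PI / 2)).
    unfold z1, z2 in C0, C1, C2.
    replace (0 / 2) with 0 in C0 by field.
    replace (PI / 2 / 2) with (PI / 4) in C2 by field.
    rewrite cos_0, sin_0 in C0. rewrite cos_PI2, sin_PI2 in C1. rewrite cos_PI4, sin_PI4 in C2.
    destruct A as [a b cc d]; unfold mdet in Hd; cbn [m11 m12 m21 m22] in *.
    assert (Hcc : cc = 0) by lra. assert (Hb : b = 0) by lra.
    destruct (sqrt2_facts) as [S1 S2].
    assert (Hda : d = a).
    { subst. assert (E : (1 / sqrt 2) * (1 / sqrt 2) * (d - a) = 0) by lra.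
      apply Rmult_integral in E. destruct E as [E|E]; [|lra].
      assert (0 < 1 / sqrt 2 * (1 / sqrt 2)) by (apply Rmult_lt_0_compat; apply Rdiv_lt_0_compat; lra).
      lra. }
    subst. assert (Ha : (a - 1) * (a + 1) = 0) by lra.
    apply Rmult_integral in Ha. destruct Ha as [Ha|Ha].
    + left. unfold mI. f_equal; lra.
    + right. unfold mnegI. f_equal; lra.
  - intros H.
    assert (Hs : forall x, sin ((x - FA A x) / 2) = 0).
    { intros x. assert (H1 := FA_AP A Hd x). unfold crossU, z1, z2 in H1.
      replace ((x - FA A x) / 2) with (x / 2 - FA A x / 2) by field.
      rewrite <- cross_trig.
      set (F := FA A x) in *. clearbody F.
      destruct H as [H|H]; subst; unfold mI, mnegI in H1; cbn [m11 m12 m21 m22] in H1.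
      - rewrite <- H1. ring.
      - replace 0 with (- 0) by ring. rewrite <- H1. ring. }
    destruct (discrete_const (fun x => x - FA A x)) as [k Hk].
    + intros x. auto_derive. repeat split; eexists; apply FA_deriv; auto.
    + exact Hs.
    + exists k. intros x. specialize (Hk x). cbv beta in Hk. lra.
Qed.


Definition rotm (psi : R) : mat2 := Mat2 (cos psi) (- sin psi) (sin psi) (cos psi).

Lemma rotm_det psi : mdet (rotm psi) = 1.
Proof. unfold mdet, rotm; cbn [m11 m12 m21 m22]. rewrite <- (unit_trig psi). ring. Qed.

Lemma abc_rot (psi : R) (B : mat2) :
  alA (mmul (rotm psi) B) = alA B /\ beA (mmul (rotm psi) B) = beA B /\
  gaA (mmul (rotm psi) B) = gaA B.
Proof.
  assert (H := unit_trig psi).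
  destruct B as [a b cc d]. unfold alA, beA, gaA, mmul, rotm; cbn [m11 m12 m21 m22].
  repeat split.
  - replace ((a * a + 0 * cc) ^ 2) with ((a * a + 0 * cc) ^ 2) by reflexivity.
    transitivity ((cos psi ^ 2 + sin psi ^ 2) * (((a ^ 2 + cc ^ 2) + (b ^ 2 + d ^ 2)) / 2));
      [field | rewrite H; ring].
  - transitivity ((cos psi ^ 2 + sin psi ^ 2) * (((a ^ 2 + cc ^ 2) - (b ^ 2 + d ^ 2)) / 2));
      [field | rewrite H; ring].
  - transitivity ((cos psi ^ 2 + sin psi ^ 2) * (a * b + cc * d)); [ring | rewrite H; ring].
Qed.

Lemma FA_rot (psi y : R) : FA (rotm psi) y = y + thetaA (rotm psi).
Proof.
  assert (Hd := rotm_det psi).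
  assert (E := const_all (fun y => FA (rotm psi) y - y)).
  rewrite <- (FA_0 (rotm psi)).
  assert (E0 : FA (rotm psi) y - y = FA (rotm psi) 0 - 0).
  { apply E. intros x.
    assert (Hn : nA (rotm psi) x = 1).
    { unfold nA, nabc, alA, beA, gaA, rotm; cbn [m11 m12 m21 m22].
      assert (H := unit_trig psi).
      transitivity (((cos psi ^ 2 + sin psi ^ 2) + (cos psi ^ 2 + sin psi ^ 2)) / 2
                    + ((cos psi ^ 2 + sin psi ^ 2) - (cos psi ^ 2 + sin psi ^ 2)) / 2 * cos x
                    + 0 * sin x); [field| rewrite H; field]. }
    replace 0 with (/ nA (rotm psi) x - 1) by (rewrite Hn; field).
    apply is_derive_Reals. apply (derivable_pt_lim_minus (FA (rotm psi)) id).
    - apply is_derive_Reals. apply FA_deriv; auto.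
    - apply derivable_pt_lim_id. }
  lra.
Qed.

Lemma thetaA_rot (psi : R) : exists j : Z, thetaA (rotm psi) = 2 * psi - 2 * PI * IZR j.
Proof.
  assert (H := thetaA_ok (rotm psi)). unfold crossU in H. rewrite FA_0 in H.
  set (th := thetaA (rotm psi)) in *. clearbody th.
  unfold z1, z2, rotm in H; cbn [m11 m12 m21 m22] in H.
  replace (0 / 2) with 0 in H by field. rewrite cos_0, sin_0 in H.
  replace (cos (th / 2) * (sin psi * 1 + cos psi * 0) -
           sin (th / 2) * (cos psi * 1 + - sin psi * 0))
    with (cos (th / 2) * sin psi - sin (th / 2) * cos psi) in H by ring.
  rewrite cross_trig in H.
  destruct (sin_eq_0_0 _ H) as [j Hj]. exists j. lra.
Qed.

Lemma nA_d_half (A : mat2) x :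
  - beA A * sin x + gaA A * cos x =
  z1 A x * (- m11 A * sin (x / 2) + m12 A * cos (x / 2)) +
  z2 A x * (- m21 A * sin (x / 2) + m22 A * cos (x / 2)).
Proof.
  unfold z1, z2, beA, gaA.
  replace x with (2 * (x / 2)) at 1 2 by field.
  rewrite cos_2a, sin_2a. field.
Qed.

Lemma match_exists (a p0 p1 y0 : R) : 0 < p0 ->
  exists A, mdet A = 1 /\ (exists k : Z, FA A a = y0 + 2 * PI * IZR k) /\
    Derive (FA A) a = p0 /\ Derive_n (FA A) 2 a = p1.
Proof.
  intros Hp0.
  assert (Hsq : 0 < sqrt p0) by (apply sqrt_lt_R0; auto).
  assert (Hsq2 : sqrt p0 * sqrt p0 = p0) by (apply sqrt_sqrt; lra).
  set (sg := / sqrt p0). set (tau := - p1 * sqrt p0 / p0 ^ 2).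
  assert (Hsg : 0 < sg) by (apply Rinv_0_lt_compat; auto).
  set (c0 := cos (a / 2)). set (s0 := sin (a / 2)).
  assert (Hcs : c0 ^ 2 + s0 ^ 2 = 1) by apply cs_half.
  set (B := Mat2 (sg * c0 - tau * s0) (sg * s0 + tau * c0) (- s0 / sg) (c0 / sg)).
  assert (HB : mdet B = 1).
  { unfold mdet, B; cbn [m11 m12 m21 m22]. rewrite <- Hcs. field. lra. }
  assert (Hz1 : z1 B a = sg).
  { unfold z1, B; cbn [m11 m12 m21 m22]. fold c0 s0.
    transitivity (sg * (c0 ^ 2 + s0 ^ 2)); [ring | rewrite Hcs; ring]. }
  assert (Hz2 : z2 B a = 0).
  { unfold z2, B; cbn [m11 m12 m21 m22]. fold c0 s0. field. lra. }
  assert (Hn : nA B a = sg ^ 2) by (rewrite nA_half, Hz1, Hz2; ring).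
  assert (Hnd : - beA B * sin a + gaA B * cos a = sg * tau).
  { rewrite nA_d_half, Hz1, Hz2. unfold B; cbn [m11 m12 m21 m22]. fold c0 s0.
    transitivity (sg * tau * (c0 ^ 2 + s0 ^ 2)); [ring | rewrite Hcs; ring]. }
  set (psi := (y0 - FA B a) / 2).
  set (A := mmul (rotm psi) B).
  assert (HA : mdet A = 1) by (unfold A; rewrite mdet_mul, rotm_det, HB; ring).
  destruct (abc_rot psi B) as [Ea [Eb Eg]]. fold A in Ea, Eb, Eg.
  exists A. split; [auto|]. split; [|split].
  - destruct (FA_hom (rotm psi) B (rotm_det psi) HB) as [k Hk].
    destruct (thetaA_rot psi) as [j Hj].
    specialize (Hk a). fold A in Hk. rewrite FA_rot, Hj in Hk.
    exists (- j - k)%Z. rewrite minus_IZR, opp_IZR. unfold psi in Hk. lra.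
  - change (Derive (FA A) a) with (Derive_n (FA A) 1 a).
    rewrite FA_Derive_n; auto. cbn [Nat.iter tev].
    rewrite Ea, Eb, Eg. change (/ nA B a = p0). rewrite Hn. unfold sg.
    replace ((/ sqrt p0) ^ 2) with (/ (sqrt p0 * sqrt p0)) by (field; lra). rewrite Hsq2.
    field. lra.
  - rewrite FA_Derive_n; auto.
    change (Nat.iter 1 (tder (beA A) (gaA A)) TInv) with (tder (beA A) (gaA A) TInv).
    cbn [tder tev]. rewrite Ea, Eb, Eg.
    change (nabc (alA B) (beA B) (gaA B) a) with (nA B a). rewrite Hn.
    replace (-1 * (- beA B * sin a + gaA B * cos a)) with (- (sg * tau)) by (rewrite <- Hnd; ring).
    assert (Hst : sg * tau = - p1 / p0 ^ 2) by (unfold sg, tau; field; lra).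
    assert (Hsg2 : sg ^ 2 = / p0) by (unfold sg; replace ((/ sqrt p0) ^ 2) with (/ (sqrt p0 * sqrt p0)) by (field; lra); rewrite Hsq2; reflexivity).
    rewrite Hst, Hsg2. field. lra.
Qed.


Lemma energy_deriv (p q P Q : R -> R) (x : R) :
  0 < p x -> 0 < P x ->
  is_derive p x (q x) ->
  is_derive q x (p x * (3 / 2 * (q x / p x) ^ 2 - (p x ^ 2 - 1) / 2)) ->
  is_derive P x (Q x) ->
  is_derive Q x (P x * (3 / 2 * (Q x / P x) ^ 2 - (P x ^ 2 - 1) / 2)) ->
  is_derive (fun y => ((q y / p y - Q y / P y) ^ 2 + (p y - P y) ^ 2) / (p y * P y)) x 0.
Proof.
  intros Hp HP Dp Dq DP DQ.
  auto_derive.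
  - repeat split; try (eexists; eassumption); try lra; nra.
  - change (fun x0 : R => p x0) with p. change (fun x0 : R => q x0) with q.
    change (fun x0 : R => P x0) with P. change (fun x0 : R => Q x0) with Q.
    rewrite (is_derive_unique _ _ _ Dp), (is_derive_unique _ _ _ Dq),
      (is_derive_unique _ _ _ DP), (is_derive_unique _ _ _ DQ).
    field. lra.
Qed.

Lemma ker_rel (c : R) (f : R -> R) (x : R) :
  c <> 0 -> is_lift f -> Sc c f x = 0 ->
  Derive_n f 3 x = Derive f x * (3 / 2 * (Derive_n f 2 x / Derive f x) ^ 2 - (Derive f x ^ 2 - 1) / 2).
Proof.
  intros hc hf H. unfold Sc in H.
  apply Rmult_integral in H. destruct H as [H|H]; [contradiction|].
  assert (Hp : 0 < Derive f x) by apply hf.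
  set (p := Derive f x) in *. set (q := Derive_n f 2 x) in *. set (r := Derive_n f 3 x) in *.
  replace r with (p * (r / p)) by (field; lra).
  f_equal. lra.
Qed.

Lemma ker_rep (c : R) (f : R -> R) :
  c <> 0 -> is_lift f -> in_ker_Sc c f ->
  exists A, mdet A = 1 /\ exists k : Z, forall x, f x = FA A x + 2 * PI * IZR k.
Proof.
  intros hc hf hk.
  assert (Hp0 : 0 < Derive f 0) by apply hf.
  destruct (match_exists 0 (Derive f 0) (Derive_n f 2 0) (f 0) Hp0) as [A [HA [[k Hk] [E1 E2]]]].
  exists A. split; [auto|].
  assert (hG := FA_lift A HA).
  assert (hGk := FA_Sc c A HA).
  set (G := FA A) in *.
  assert (Hd : forall y, is_derive
     (fun y => ((Derive_n f 2 y / Derive f y - Derive_n G 2 y / Derive G y) ^ 2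
                + (Derive f y - Derive G y) ^ 2) / (Derive f y * Derive G y)) y 0).
  { intros y. apply energy_deriv.
    - apply hf.
    - apply hG.
    - apply lift_d1; auto.
    - rewrite <- ker_rel with (c := c); auto. apply lift_d2; auto.
    - apply lift_d1; auto.
    - rewrite <- ker_rel with (c := c); auto. apply lift_d2; auto. }
  assert (Heq : forall y, Derive f y = Derive G y).
  { intros y. assert (E := const_all _ Hd y 0). cbv beta in E.
    rewrite E1, E2 in E.
    replace ((Derive_n f 2 0 / Derive f 0 - Derive_n f 2 0 / Derive f 0) ^ 2 +
             (Derive f 0 - Derive f 0) ^ 2) with 0 in E by ring.
    assert (Hpy : 0 < Derive f y) by apply hf.
    assert (HPy : 0 < Derive G y) by apply hG.
    assert (Hpp : 0 < Derive f y * Derive G y) by (apply Rmult_lt_0_compat; auto).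
    set (u := Derive_n f 2 y / Derive f y - Derive_n G 2 y / Derive G y) in E.
    assert (N : u ^ 2 + (Derive f y - Derive G y) ^ 2 = 0).
    { replace (u ^ 2 + (Derive f y - Derive G y) ^ 2) with
        ((u ^ 2 + (Derive f y - Derive G y) ^ 2) / (Derive f y * Derive G y) * (Derive f y * Derive G y))
        by (field; lra).
      rewrite E. unfold Rdiv. rewrite Rmult_0_l. ring. }
    assert (G1 := pow2_ge_0 u). assert (G2 := pow2_ge_0 (Derive f y - Derive G y)).
    assert (Z : (Derive f y - Derive G y) ^ 2 = 0) by lra.
    apply sq0 in Z. lra. }
  assert (Hc : forall y, f y - G y = f 0 - G 0).
  { intros y0. apply (const_all (fun t => f t - G t)). intros y.
    replace 0 with (Derive f y - Derive G y) by (rewrite Heq; ring).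
    apply is_derive_Reals. apply (derivable_pt_lim_minus f G).
    - apply is_derive_Reals. apply lift_d0; auto.
    - apply is_derive_Reals. apply lift_d0; auto. }
  exists (- k)%Z. intros x. rewrite opp_IZR. specialize (Hc x). unfold G in *. lra.
Qed.

Lemma gc_shift (c a b m : R) : gc c (a + m) (b + m) = gc c a b.
Proof. unfold gc. rewrite !chord2_eq. replace (a + m - (b + m)) with (a - b) by ring. reflexivity. Qed.

Theorem ker_isom (c : R) (f : R -> R) :
  c <> 0 -> is_lift f -> in_ker_Sc c f -> is_isom c f.
Proof.
  intros hc hf hk.
  destruct (ker_rep c f hc hf hk) as [A [HA [k Hk]]].
  assert (Ef : f = fun x => FA A x + 2 * PI * IZR k) by (apply functional_extensionality; auto).
  assert (Ed : forall x, Derive f x = Derive (FA A) x).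
  { intros x. rewrite Ef. apply is_derive_unique.
    apply is_derive_Reals. replace (Derive (FA A) x) with (Derive (FA A) x + 0) by ring.
    apply (derivable_pt_lim_plus (FA A) (fun _ => 2 * PI * IZR k)).
    - apply is_derive_Reals. apply lift_d0. apply FA_lift; auto.
    - apply derivable_pt_lim_const. }
  intros t1 t2 Ho. rewrite !Ed, !Hk, gc_shift. apply FA_isom; auto.
Qed.

Theorem mainTheorem8 (c : R) (hc : c <> 0) :
  (* Isom_+(H, g_c) = ker(S_c) *)
  (forall f : R -> R, is_lift f -> (is_isom c f <-> in_ker_Sc c f)) /\
  (* Isom_+(H, g_c) ≅ PSL(2,R): a group homomorphism from SL(2,R) onto
     Isom_+(H, g_c) (inside Diff_+(T)) whose kernel is {I, -I} *)
  (exists F : mat2 -> (R -> R),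
     (forall A, mdet A = 1 -> is_lift (F A) /\ is_isom c (F A)) /\
     (forall f, is_lift f -> is_isom c f ->
        exists A, mdet A = 1 /\ same_diffeo (F A) f) /\
     (forall A B, mdet A = 1 -> mdet B = 1 ->
        same_diffeo (F (mmul A B)) (fun x => F A (F B x))) /\
     (forall A, mdet A = 1 ->
        (same_diffeo (F A) (fun x => x) <-> A = mI \/ A = mnegI))).
Proof.
  split.
  - intros f hf. split.
    + apply isom_ker; auto.
    + apply ker_isom; auto.
  - exists FA. split; [|split; [|split]].
    + intros A HA. split; [apply FA_lift; auto | apply FA_isom; auto].
    + intros f hf hi.
      destruct (ker_rep c f hc hf (isom_ker c f hc hf hi)) as [A [HA [k Hk]]].
      exists A. split; auto. exists k. auto.
    + apply FA_hom.
    + apply FA_ker.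
Qed.
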